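(* Let $G$ be a finite nonabelian group such that the kernels of the nonlinear irreducible characters of $G$ are totally ordered by inclusion. If $M$ is a normal subgroup of $G$ with $M<G'$, then $M$ is a waist of $G$.
   Context: A nonlinear irreducible character is $\chi\in\mathrm{Irr}(G)$ with $\chi(1)>1$; $\ker\chi=\{g:\chi(g)=\chi(1)\}$. A waist of $G$ is a normal subgroup $W$ such that for every normal subgroup $N$ of $G$, either $N\le W$ or $W\le N$. *)

(* Defs.v *)
From HB Require Import structures.
From mathcomp Require Import all_boot all_order all_algebra all_fingroup all_solvable all_field all_character.
Set Implicit Arguments. Unset Strict Implicit. Unset Printing Implicit Defensive.
Import GroupScope.

Definition waist (gT : finGroupType) (G W : {group gT}) : Prop :=
  W <| G /\ forall N : {group gT}, N <| G -> N \subset W \/ W \subset N.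

Definition nonlinear_irr (gT : finGroupType) (G : {group gT}) (i : Iirr G) : bool :=
  (1 < 'chi_i 1%g)%R.

(* Main.v *)
Require Import Defs.
From HB Require Import structures.
From mathcomp Require Import all_boot all_order all_algebra all_fingroup all_solvable all_field all_character.
Import GroupScope.
Import Order.TTheory GRing.Theory Num.Theory.
Local Open Scope ring_scope.

Section Aux.
Variable gT : finGroupType.
Variable G : {group gT}.

Lemma nonlinE (i : Iirr G) : nonlinear_irr i = ~~ ('chi_i \is a linear_char).
Proof.
rewrite /nonlinear_irr qualifE /= irr_char /= irr1_degree ltr1n pnatr_eq1.
have : (0 < irr_degree (socle_of_Iirr i))%N by apply: irr_degree_gt0.
by case: (irr_degree _) => [|[|n]].
Qed.

Lemma exists_nonlin (H : {group gT}) : H <| G -> ~~ ((G^`(1))%g \subset H) ->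
  exists i : Iirr G, nonlinear_irr i && (H \subset cfker 'chi_i).
Proof.
move=> nsHG nG'H.
have [|/existsPn hn] := boolP [exists i : Iirr G, nonlinear_irr i && (H \subset cfker 'chi_i)].
  by case/existsP=> i hi; exists i.
case/negP: nG'H; rewrite -(cap_cfker_normal nsHG); apply/bigcapsP=> i Hi.
have := hn i; rewrite Hi andbT nonlinE negbK.
by rewrite lin_irr_der1.
Qed.

Lemma exists_min (H : {group gT}) :
  (forall i j : Iirr G, nonlinear_irr i -> nonlinear_irr j ->
     cfker ('chi_i)%R \subset cfker ('chi_j)%R \/ cfker ('chi_j)%R \subset cfker ('chi_i)%R) ->
  (exists i : Iirr G, nonlinear_irr i && (H \subset cfker 'chi_i)) ->
  exists i0 : Iirr G, [/\ nonlinear_irr i0, H \subset cfker 'chi_i0 &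
     forall j : Iirr G, nonlinear_irr j -> H \subset cfker 'chi_j ->
        cfker 'chi_i0 \subset cfker 'chi_j].
Proof.
move=> tot [i Pi].
case: (@arg_minnP (Iirr G) i (fun i => nonlinear_irr i && (H \subset cfker 'chi_i))
   (fun i => #|cfker 'chi_i|) Pi) => i0 /andP[nl0 H0] min0.
exists i0; split=> // j nlj Hj.
case: (tot i0 j nl0 nlj) => // sji.
have le := min0 j (introT andP (conj nlj Hj)).
have /eqP -> : cfker 'chi_j == cfker 'chi_i0 by rewrite eqEcard sji le.
exact: subxx.
Qed.

Lemma min_cap (H : {group gT}) (i0 : Iirr G) : H <| G ->
  (forall j : Iirr G, nonlinear_irr j -> H \subset cfker 'chi_j ->
        cfker 'chi_i0 \subset cfker 'chi_j) ->
  (G^`(1))%g :&: cfker 'chi_i0 \subset H.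
Proof.
move=> nsHG min0; apply: subset_trans (_ : _ \subset \bigcap_(i | H \subset cfker 'chi[G]_i) cfker 'chi_i) _; last by rewrite cap_cfker_normal.
apply/bigcapsP=> j Hj.
case: (boolP (nonlinear_irr j)) => nl.
  by rewrite (subset_trans (subsetIr _ _)) // min0.
move: nl; rewrite nonlinE negbK lin_irr_der1 => sG'.
exact: subset_trans (subsetIl _ _) sG'.
Qed.

Lemma min_sub_der (H : {group gT}) (i0 : Iirr G) : H \subset (G^`(1))%g ->
  nonlinear_irr i0 -> H \subset cfker 'chi_i0 ->
  (forall j : Iirr G, nonlinear_irr j -> H \subset cfker 'chi_j ->
        cfker 'chi_i0 \subset cfker 'chi_j) ->
  cfker 'chi_i0 \subset (G^`(1))%g.
Proof.
move=> sHG' nl0 H0 min0; rewrite -cap_cfker_lin_irr; apply/bigcapsP=> j linj.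
have /irrP[k Ek] := mul_lin_irr linj (mem_irr i0).
have k1 : 'chi_k 1%g = 'chi_i0 1%g by rewrite -Ek cfunE lin_char1 // mul1r.
have nlk : nonlinear_irr k by rewrite /nonlinear_irr k1.
have sHk : H \subset cfker 'chi_k.
  apply/subsetP=> h Hh; rewrite cfkerEirr inE k1 -Ek cfunE.
  have hj : h \in cfker 'chi_j.
    by apply: subsetP Hh; apply: subset_trans sHG' _; rewrite -lin_irr_der1.
  move: hj; rewrite cfkerEirr inE => /eqP ->; rewrite lin_char1 // mul1r.
  by move: (subsetP H0 h Hh); rewrite cfkerEirr inE.
apply/subsetP=> g Kg.
have Kkg : g \in cfker 'chi_k by apply: subsetP Kg; exact: min0.
move: Kkg Kg; rewrite !cfkerEirr !inE k1 -Ek cfunE => /eqP e /eqP e0.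
rewrite e0 in e; rewrite lin_char1 //; apply/eqP.
by apply: (mulIf (irr1_neq0 i0)); rewrite e mul1r.
Qed.
End Aux.

Local Close Scope ring_scope.

Theorem mainTheorem15 (gT : finGroupType) (G M : {group gT}) :
  ~~ abelian G ->
  (forall i j : Iirr G, nonlinear_irr i -> nonlinear_irr j ->
     cfker ('chi_i)%R \subset cfker ('chi_j)%R \/ cfker ('chi_j)%R \subset cfker ('chi_i)%R) ->
  M <| G -> M \proper G^`(1) ->
  waist G M.
Proof.
move=> _ tot nsMG /properP[sMG' [x G'x Mx]].
have nG'M : ~~ ((G^`(1))%g \subset M).
  by apply/negP=> /subsetP/(_ x G'x); apply/negP.
have [i0 [nl0 M0 min0]] := @exists_min _ _ M tot (@exists_nonlin _ _ _ nsMG nG'M).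
have K0M : cfker ('chi_i0)%R \subset M.
  apply: subset_trans (@min_cap _ _ _ _ nsMG min0).
  by rewrite subsetI subxx (@min_sub_der _ _ _ _ sMG' nl0 M0 min0).
split=> // N nsNG.
have [sG'N|nG'N] := boolP ((G^`(1))%g \subset N).
  by right; exact: subset_trans sMG' sG'N.
have [iN [nlN NN minN]] := @exists_min _ _ N tot (@exists_nonlin _ _ _ nsNG nG'N).
case: (tot i0 iN nl0 nlN) => s.
  right; apply: subset_trans (@min_cap _ _ _ _ nsNG minN).
  by rewrite subsetI sMG' (subset_trans M0 s).
by left; apply: subset_trans NN (subset_trans s K0M).
Qed.
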